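(* Let $S$ be a finite set, let $\mathcal{G}\subseteq 2^S$ be connected, and let $\mathcal{C}_1,\mathcal{C}_2\subseteq\mathcal{G}$. Then $\chi(\mathcal{C}_1)=\chi(\mathcal{C}_2)$ if and only if $\mathcal{C}_1\simeq_{\mathrm{ap}(\mathcal{G})}\mathcal{C}_2$.
   Context: An adjacent pair of $2^S$ is a set $\{X,X\setminus\{x\}\}$ with $X\subseteq S$ and $x\in X$. Let $G_S$ be the undirected graph with vertex set $2^S$ whose edges are the adjacent pairs; $\mathcal{G}\subseteq 2^S$ is connected if it induces a connected subgraph of $G_S$. The allowed adjacent pairs relative to $\mathcal{G}$ are $\mathrm{ap}(\mathcal{G})=\{\mathcal{P}\mid\mathcal{P}\text{ an adjacent pair of }2^S,\ \mathcal{P}\subseteq\mathcal{G}\}$. For a set $A$ of adjacent pairs and configurations $\mathcal{C},\mathcal{C}'\subseteq 2^S$, write $\mathcal{C}\to\mathcal{C}'$ if there is $\mathcal{P}\in A$ with $\mathcal{P}\cap\mathcal{C}=\emptyset$ and $\mathcal{C}'=\mathcal{C}\cup\mathcal{P}$, or with $\mathcal{P}\subseteq\mathcal{C}$ and $\mathcal{C}'=\mathcal{C}\setminus\mathcal{P}$; $\simeq_A$ is the reflexive transitive closure of this (symmetric) relation. For a family $\mathcal{D}$ of finite sets, $\chi(\mathcal{D})=\sum_{Y\in\mathcal{D}}(-1)^{|Y|}$. *)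

(* Defs.v *)
From mathcomp Require Import all_boot all_order all_algebra.
From Stdlib Require Import Relations.
Set Implicit Arguments. Unset Strict Implicit. Unset Printing Implicit Defensive.
Import GRing.Theory Num.Theory.

(* The finite ground set S is the finType T; 2^S is {set T};
   families of subsets (configurations) are {set {set T}}. *)

Definition GS_edge (T : finType) : rel {set T} :=
  fun X Y => [exists x, (x \in X) && (Y == X :\ x)]
          || [exists x, (x \in Y) && (X == Y :\ x)].

Definition induced_edge (T : finType) (G : {set {set T}}) : rel {set T} :=
  fun X Y => [&& X \in G, Y \in G & GS_edge X Y].

Definition connected_family (T : finType) (G : {set {set T}}) : Prop :=
  forall X Y, X \in G -> Y \in G -> connect (induced_edge G) X Y.

Definition ap (T : finType) (G : {set {set T}}) : {set {set {set T}}} :=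
  [set P | [exists X : {set T}, exists x : T,
              (x \in X) && (P == [set X; X :\ x])] & P \subset G].

Definition move (T : finType) (A : {set {set {set T}}})
    (C C' : {set {set T}}) : Prop :=
  exists2 P, P \in A &
    ((P :&: C = set0 /\ C' = C :|: P) \/ (P \subset C /\ C' = C :\: P)).

Definition equivA (T : finType) (A : {set {set {set T}}}) :
    relation {set {set T}} :=
  clos_refl_trans _ (move A).

Definition chi (T : finType) (D : {set {set T}}) : int :=
  (\sum_(Y in D) (-1) ^+ #|Y|)%R.

(* Main.v *)
Require Import Defs.
From mathcomp Require Import all_boot all_order all_algebra zify.
From Stdlib Require Import Relations.
Set Implicit Arguments. Unset Strict Implicit. Unset Printing Implicit Defensive.
Import GRing.Theory Num.Theory.

Section S_sec.
Variable T : finType.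
Implicit Types (G C P : {set {set T}}) (X Y Z W : {set T}).

Lemma chi_split C P : chi C = (chi (C :&: P) + chi (C :\: P))%R.
Proof. by rewrite /chi (big_setID P). Qed.

Lemma chi_pair X x : x \in X -> chi [set X; X :\ x] = 0%R.
Proof.
move=> xX.
have ne : X != X :\ x by apply/eqP=> /setP/(_ x); rewrite !inE eqxx xX.
rewrite /chi big_setU1 /= ?inE // big_set1.
by rewrite (cardsD1 x X) xX add1n exprS mulN1r addNr.
Qed.

Lemma chi_ap G P : P \in ap G -> chi P = 0%R.
Proof.
rewrite inE => /andP[/existsP[X /existsP[x /andP[xX /eqP->]]] _].
exact: chi_pair.
Qed.

Lemma move_chi G C C' : move (ap G) C C' -> chi C = chi C'.
Proof.
case=> P /chi_ap h0 [[dis ->]|[sPC ->]].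
  rewrite (chi_split (C :|: P) P) (setIidPr (subsetUr C P)) h0 add0r.
  have -> : (C :|: P) :\: P = C.
    apply/setP=> X; rewrite !inE; case: (boolP (X \in P)) => //= XP; last by rewrite orbF.
    apply/esym/negP=> XC; move/setP: dis => /(_ X); by rewrite !inE XC XP.
  by [].
have := chi_split C P; rewrite (setIidPr sPC) h0 add0r.
by [].
Qed.

Lemma equiv_chi G C C' : equivA (ap G) C C' -> chi C = chi C'.
Proof.
elim=> //; first exact: move_chi.
by move=> ? ? ? _ -> _ ->.
Qed.

Lemma move_sym A C C' : move A C C' -> move A C' C.
Proof.
case=> P PA [[dis ->]|[sPC ->]]; exists P => //.
  right; split; first exact: subsetUr.
  apply/setP=> X; rewrite !inE; case: (boolP (X \in P)) => /= XP; last by rewrite orbF.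
  apply/negP=> XC; move/setP: dis => /(_ X); by rewrite !inE XC XP.
left; split; first by apply/setP=> X; rewrite !inE; case: (X \in P).
apply/setP=> X; rewrite !inE; case: (boolP (X \in P)) => /= XP; last by rewrite orbF.
by rewrite (subsetP sPC).
Qed.

Lemma equivA_sym A C C' : equivA A C C' -> equivA A C' C.
Proof.
elim.
- by move=> ? ? /move_sym h; apply: rt_step.
- by move=> ?; apply: rt_refl.
- by move=> ? ? ? _ h1 _ h2; apply: rt_trans h2 h1.
Qed.

End S_sec.

Section S_sec.
Variable T : finType.
Implicit Types (G C P : {set {set T}}) (X Y Z W : {set T}).

Lemma GS_par X Y : GS_edge X Y -> odd #|X| = ~~ odd #|Y|.
Proof.
case/orP=> /existsP[x /andP[xX /eqP->]].
  by rewrite (cardsD1 x X) xX add1n.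
by rewrite (cardsD1 x Y) xX add1n /= negbK.
Qed.

Lemma GS_neq X Y : GS_edge X Y -> X != Y.
Proof.
move/GS_par=> h; apply/eqP=> e; move: h; rewrite e; by case: (odd _).
Qed.

Lemma edge_ap G X Y : induced_edge G X Y -> [set X; Y] \in ap G.
Proof.
case/and3P=> XG YG e; rewrite inE; apply/andP; split; last first.
  by apply/subsetP=> Z; rewrite !inE => /orP[]/eqP->.
case/orP: e => /existsP[x /andP[xX /eqP->]].
  by apply/existsP; exists X; apply/existsP; exists x; rewrite xX eqxx.
by apply/existsP; exists Y; apply/existsP; exists x; rewrite xX setUC eqxx.
Qed.

Lemma path_par G Y p : path (induced_edge G) Y p ->
  odd (size p) = (odd #|Y| != odd #|last Y p|).
Proof.
elim: p Y => [|a p IH] Y /=; first by case: (odd _).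
case/andP=> /and3P[_ _ /GS_par e] /IH ->.
by rewrite e; case: (odd #|a|); case: (odd _).
Qed.

Lemma path_inG G Y p : path (induced_edge G) Y p -> last Y p \in G \/ p = [::].
Proof.
elim: p Y => [|a p IH] Y /=; first by right.
case/andP=> /and3P[_ aG _] /IH [h|->]; by left.
Qed.

Ltac simp_facts :=
  repeat match goal with
  | H : is_true (?a != ?b) |- context[?a == ?b] => rewrite (negbTE H)
  | H : is_true (?a != ?b) |- context[?b == ?a] => rewrite [b == a]eq_sym (negbTE H)
  | H : is_true (?a \in ?c) |- context[?a \in ?c] => rewrite H
  | H : is_true (?a \notin ?c) |- context[?a \in ?c] => rewrite (negbTE H)
  end.

Ltac solve3 Y W Z :=
  let X := fresh "X" in
  apply/setP=> X; rewrite !inE;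
  case: (eqVneq X Y) => [->|?]; [|case: (eqVneq X W) => [->|?]; [|case: (eqVneq X Z) => [->|?]]];
  simp_facts; rewrite ?eqxx /= ?orbT ?orbF ?andbT ?andbF //; by case: (_ \in _).

Definition mv X Z C := Z |: (C :\ X).

Lemma two_step G C Y W Z : induced_edge G Y W -> induced_edge G W Z ->
  Y \in C -> Z \notin C -> equivA (ap G) C (mv Y Z C).
Proof.
move=> e1 e2 YC ZC.
have nYW : Y != W by case/and3P: e1 => _ _ /GS_neq.
have nWZ : W != Z by case/and3P: e2 => _ _ /GS_neq.
have nYZ : Y != Z by apply/eqP=> e; move: ZC; rewrite -e YC.
have p1 := edge_ap e1; have p2 := edge_ap e2.
case: (boolP (W \in C)) => WC.
  apply: (rt_trans _ _ _ (C :\: [set Y; W])).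
    apply: rt_step; exists [set Y; W] => //; right; split => //.
    by apply/subsetP=> X; rewrite !inE => /orP[]/eqP->.
  apply: rt_step; exists [set W; Z] => //; left; split; solve3 Y W Z.
apply: (rt_trans _ _ _ (C :|: [set W; Z])).
  apply: rt_step; exists [set W; Z] => //; left; split => //; solve3 Y W Z.
apply: rt_step; exists [set Y; W] => //; right; split.
  by apply/subsetP=> X; rewrite !inE => /orP[]/eqP->; rewrite ?YC ?eqxx ?orbT.
solve3 Y W Z.
Qed.

Lemma transport G n : forall p Y C, size p <= n ->
  path (induced_edge G) Y p -> ~~ odd (size p) -> Y \in C -> last Y p \notin C ->
  equivA (ap G) C (mv Y (last Y p) C).
Proof.
elim: n => [|n IH] [|v1 [|v2 q]] Y C //=.
- by move=> _ _ _ ->.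
- by move=> _ _ _ ->.
rewrite ltnS => /ltnW sz /andP[e1 /andP[e2 pq]]; rewrite negbK => oq YC ZC.
set Z := last v2 q in ZC *.
have nYZ : Y != Z by apply/eqP=> e; move: ZC; rewrite -e YC.
case: (boolP (v2 \in C)) => v2C.
  case: (eqVneq Y v2) => [eY|nYv2].
    by rewrite eY; apply: IH => //; rewrite -eY.
  have nv2Z : v2 != Z by apply/eqP=> e; move: ZC; rewrite -e v2C.
  apply: (rt_trans _ _ _ (mv v2 Z C)); first by apply: IH => //.
  have -> : mv Y Z C = mv Y v2 (mv v2 Z C) by rewrite /mv; solve3 Y v2 Z.
  apply: (two_step e1 e2); rewrite /mv !inE ?eqxx ?(negbTE nYv2) ?YC ?andbT ?orbT //=.
by rewrite orbF.
have nYv2 : Y != v2 by apply/eqP=> e; move: v2C; rewrite -e YC.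
apply: (rt_trans _ _ _ (mv Y v2 C)); first exact: (two_step e1 e2).
case: (eqVneq v2 Z) => [e|nv2Z].
  by rewrite -/Z -e; apply: rt_refl.
have -> : mv Y Z C = mv v2 Z (mv Y v2 C) by rewrite /mv; solve3 Y v2 Z.
apply: IH => //; rewrite /mv !inE ?eqxx //= -/Z.
by rewrite eq_sym (negbTE nv2Z) (negbTE ZC) andbF.
Qed.

End S_sec.

Section S_sec.
Variable T : finType.
Implicit Types (G C P : {set {set T}}) (X Y Z W : {set T}).

Lemma get_path G Y Z : connected_family G -> Y \in G -> Z \in G ->
  exists2 p, path (induced_edge G) Y p & Z = last Y p.
Proof. by move=> cG YG ZG; apply/connectP; apply: cG. Qed.

Lemma reduce G : connected_family G -> forall n C, #|C| <= n -> C \subset G ->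
  exists C', [/\ C' \subset G, equivA (ap G) C C' &
                 exists b, forall X, X \in C' -> odd #|X| = b].
Proof.
move=> cG; elim=> [|n IH] C szC CG.
  exists C; split => //; first exact: rt_refl.
  by exists false => X XC; move: szC; rewrite leqn0 => /eqP/cards0_eq Ce; rewrite Ce inE in XC.
case: (boolP [forall Y in C, forall Z in C, odd #|Y| == odd #|Z|]) =>
   [/forall_inP h | /forall_inPn [Y YC /forall_inPn [Z ZC nYZ]]].
  exists C; split => //; first exact: rt_refl.
  case: (set_0Vmem C) => [->|[Y YC]]; first by exists false => X; rewrite inE.
  exists (odd #|Y|) => X XC; have := h X XC; move/forall_inP/(_ Y YC)/eqP; done.
have [p pth eZ] := get_path cG (subsetP CG Y YC) (subsetP CG Z ZC).
have op : odd (size p) by rewrite (path_par pth) -eZ.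
case/lastP: p pth eZ op => [|q Z'] //.
rewrite rcons_path last_rcons size_rcons /= => /andP[pq eW] eZ; subst Z'.
set W := last Y q in eW; move=> oq.
have nYZ' : Y != Z by apply/eqP=> e; move: nYZ; rewrite e eqxx.
have [C2 eC2 sC2] : exists2 C2, equivA (ap G) C C2 & C2 \subset C :\ Z.
  case: (boolP (W \in C)) => WC.
    exists (C :\: [set W; Z]).
      apply: rt_step; exists [set W; Z]; first exact: edge_ap.
      by right; split => //; apply/subsetP=> X; rewrite !inE => /orP[]/eqP->.
    by apply/subsetP=> X; rewrite !inE negb_or => /andP[/andP[_ ->] ->].
  have nWZ : W != Z by apply/eqP=> e; move: WC; rewrite e ZC.
  exists (mv Y W C :\: [set W; Z]).
    apply: (rt_trans _ _ _ (mv Y W C)); first by apply: (transport (n := size q)).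
    apply: rt_step; exists [set W; Z]; first exact: edge_ap.
    right; split => //; apply/subsetP=> X; rewrite !inE => /orP[]/eqP->;
      rewrite ?eqxx //= ZC [Z == Y]eq_sym nYZ' orbT //.
  apply/subsetP=> X; rewrite /mv !inE negb_or => /andP[/andP[nXW ->]].
  by rewrite (negbTE nXW) /= => /andP[_ ->].
have [C' [C'G eC' hb]] : exists C', [/\ C' \subset G, equivA (ap G) C2 C' &
                 exists b, forall X, X \in C' -> odd #|X| = b].
  apply: IH.
    have := subset_leqif_cards sC2; move=> [le _]; apply: leq_trans le _.
    by move: szC; rewrite (cardsD1 Z C) ZC.
  apply: subset_trans sC2 _; apply: subset_trans CG; exact: subsetDl.
by exists C'; split => //; apply: rt_trans eC2 eC'.
Qed.

Lemma same G b : connected_family G -> forall n C1 C2, #|C1 :\: C2| <= n ->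
  C1 \subset G -> C2 \subset G ->
  (forall X, X \in C1 :|: C2 -> odd #|X| = b) -> #|C1| = #|C2| ->
  equivA (ap G) C1 C2.
Proof.
move=> cG; elim=> [|n IH] C1 C2 sz C1G C2G hb ecard.
  have : C1 == C2.
    rewrite eqEcard ecard leqnn andbT -setD_eq0; apply/eqP/cards0_eq.
    by apply/eqP; rewrite -leqn0.
  by move/eqP->; apply: rt_refl.
case: (set_0Vmem (C1 :\: C2)) => [e|[Y]].
  have : C1 == C2 by rewrite eqEcard ecard leqnn andbT -setD_eq0 e.
  by move/eqP->; apply: rt_refl.
rewrite inE => /andP[YC2 YC1].
have : 0 < #|C2 :\: C1|.
  rewrite cardsD setIC -ecard -cardsD card_gt0; apply/set0Pn; exists Y.
  by rewrite inE YC2 YC1.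
rewrite card_gt0 => /set0Pn[Z]; rewrite inE => /andP[ZC1 ZC2].
have [p pth eZ] := get_path cG (subsetP C1G Y YC1) (subsetP C2G Z ZC2).
have ep : ~~ odd (size p).
  rewrite (path_par pth) -eZ hb ?inE ?YC1 // hb ?inE ?ZC2 ?orbT //.
  by rewrite eqxx.
have e1 : equivA (ap G) C1 (mv Y Z C1).
  by rewrite [in X in equivA _ _ X]eZ; apply: (transport (n := size p)) => //; rewrite -eZ.
apply: rt_trans e1 _; apply: IH => //.
- have le : mv Y Z C1 :\: C2 \subset (C1 :\: C2) :\ Y.
    apply/subsetP=> X; rewrite /mv !inE => /andP[XC2 /orP[/eqP eXZ|/andP[-> ->]]].
      by move: XC2; rewrite eXZ ZC2.
    by rewrite XC2.
  apply: leq_trans (subset_leq_card le) _.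
  by move: sz; rewrite (cardsD1 Y (C1 :\: C2)) !inE YC2 YC1.
- apply/subsetP=> X; rewrite /mv !inE => /orP[/eqP->|/andP[_ XC1]].
    exact: (subsetP C2G).
  exact: (subsetP C1G).
- move=> X; rewrite /mv !inE => /orP[/orP[/eqP->|/andP[_ XC1]]|XC2].
  + by apply: hb; rewrite inE ZC2 orbT.
  + by apply: hb; rewrite inE XC1.
  + by apply: hb; rewrite inE XC2 orbT.
- rewrite /mv cardsU1 !inE (negbTE ZC1) andbF /= -ecard (cardsD1 Y C1) YC1.
  by rewrite add1n.
Qed.

Lemma chi_par C b : (forall X, X \in C -> odd #|X| = b) ->
  chi C = ((-1) ^+ b * (#|C|%:R))%R.
Proof.
move=> h; rewrite /chi.
rewrite (eq_bigr (fun _ => (-1) ^+ b)%R); last first.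
  by move=> X XC; rewrite -signr_odd h.
by rewrite sumr_const mulr_natr.
Qed.

End S_sec.

Theorem proposition6p7 (T : finType) (G C1 C2 : {set {set T}}) :
  connected_family G -> C1 \subset G -> C2 \subset G ->
  (chi C1 = chi C2 <-> equivA (ap G) C1 C2).
Proof.
move=> cG C1G C2G; split; last exact: equiv_chi.
move=> hchi.
have [D1 [D1G e1 [b1 h1]]] := reduce cG (leqnn #|C1|) C1G.
have [D2 [D2G e2 [b2 h2]]] := reduce cG (leqnn #|C2|) C2G.
apply: (rt_trans _ _ _ _ _ e1); refine (rt_trans _ _ _ D2 _ _ (equivA_sym e2)).
move: hchi; rewrite (equiv_chi e1) (equiv_chi e2) (chi_par h1) (chi_par h2).
have H : forall (n1 n2 : nat) (c1 c2 : bool),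
    ((-1) ^+ c1 * n1%:R = (-1) ^+ c2 * n2%:R :> int)%R ->
    n1 = n2 /\ (n1 = 0 \/ c1 = c2).
  move=> n1 n2 [] [] /=; rewrite ?expr0 ?expr1 ?mul1r ?mulN1r => h; lia.
case/H=> en [n0|eb].
  have -> : D1 = set0 by apply: cards0_eq.
  have -> : D2 = set0 by apply: cards0_eq; rewrite -en.
  exact: rt_refl.
apply: (same (b := b1) cG (leqnn _)) => //.
move=> X; rewrite inE => /orP[/h1|/h2] -> //.
Qed.
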